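(* Let $A$ be a partially ordered set with top element $\top$ and bottom element $\bot$. For games over $A$, each left equivalence class has a unique maximal element with respect to $\le$ (up to equivalence $\equiv$), and these maximal elements are precisely the games that are right equivalent to $\top$.
   Context: Games over a poset $A$ are defined inductively: for each $a\in A$ there is an atomic game $[a]$, which has no options; and if $L$ and $R$ are non-empty sets of games, then $\{L\mid R\}$ is a composite game with left options $L$ and right options $R$; $\{S,L\mid R\}$ denotes the game with left options $S\cup L$ and right options $R$. The relations $\le$ and $\lhd$ are defined by simultaneous recursion: $G\le H$ iff (1) every left option $G^L$ of $G$ satisfies $G^L\lhd H$, (2) every right option $H^R$ of $H$ satisfies $G\lhd H^R$, and (3) if $G$ or $H$ is atomic then $G\lhd H$; and $G\lhd H$ iff (1) some right option $G^R$ of $G$ satisfies $G^R\le H$, or (2) some left option $H^L$ of $H$ satisfies $G\le H^L$, or (3) $G=[a]$, $H=[b]$ are atomic and $a\le b$. $G\equiv H$ means $G\le H$ and $H\le G$. For games $H,K$: $H\le_L K$ if $\{H,L\mid R\}\le\{K,L\mid R\}$ for every (possibly empty) set of games $L$ and every non-empty set of games $R$; $H\le_R K$ if $\{L\mid R,H\}\le\{L\mid R,K\}$ for every set of games $R$ and every non-empty set of games $L$. $H$ and $K$ are left equivalent if $H\le_L K$ and $K\le_L H$, and right equivalent if $H\le_R K$ and $K\le_R H$. *)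

(* Defs.v *)
From HB Require Import structures.
From mathcomp Require Import all_boot all_order.
Set Implicit Arguments. Unset Strict Implicit. Unset Printing Implicit Defensive.
Import Order.TTheory.
Local Open Scope order_scope.

(* Games over A.  A composite game {L | R} is given by two families of
   options indexed by arbitrary (non-empty) types; the option *sets* are the
   images of these families. *)
Inductive game (A : Type) : Type :=
| Atom : A -> game A
| Comp : forall (IL : Type), (IL -> game A) ->
         forall (IR : Type), (IR -> game A) ->
         inhabited IL -> inhabited IR -> game A.

Arguments Atom {A} _.

Definition is_atom {A} (G : game A) : Prop :=
  match G with Atom _ => True | _ => False end.

Definition leftopt {A} (X G : game A) : Prop :=
  match G with
  | Atom _ => False
  | Comp _ L _ _ _ _ => exists i, L i = X
  end.

Definition rightopt {A} (X G : game A) : Prop :=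
  match G with
  | Atom _ => False
  | Comp _ _ _ R _ _ => exists j, R j = X
  end.

Section Order.
Context {d : Order.disp_t} {A : porderType d}.

(* G <= H and G <| H, defined by simultaneous (well-founded) recursion;
   rendered as a mutual inductive, whose clauses are exactly the defining
   clauses (games are well-founded, so the solution is unique). *)
Inductive gle : game A -> game A -> Prop :=
| gle_intro G H :
    (forall GL, leftopt GL G -> glf GL H) ->
    (forall HR, rightopt HR H -> glf G HR) ->
    (is_atom G \/ is_atom H -> glf G H) ->
    gle G H
with glf : game A -> game A -> Prop :=
| glf_right G H GR : rightopt GR G -> gle GR H -> glf G H
| glf_left G H HL : leftopt HL H -> gle G HL -> glf G H
| glf_atom (a b : A) : a <= b -> glf (Atom a) (Atom b).

Definition geqv (G H : game A) : Prop := gle G H /\ gle H G.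

Definition addL (H : game A) (IL : Type) (L : IL -> game A)
    (IR : Type) (R : IR -> game A) (hR : inhabited IR) : game A :=
  @Comp A (option IL) (fun o => match o with None => H | Some i => L i end)
    IR R (inhabits None) hR.

Definition addR (H : game A) (IL : Type) (L : IL -> game A) (hL : inhabited IL)
    (IR : Type) (R : IR -> game A) : game A :=
  @Comp A IL L (option IR)
    (fun o => match o with None => H | Some j => R j end) hL (inhabits None).

Definition leL (H K : game A) : Prop :=
  forall (IL : Type) (L : IL -> game A) (IR : Type) (R : IR -> game A)
         (hR : inhabited IR),
    gle (addL H L R hR) (addL K L R hR).

Definition leR (H K : game A) : Prop :=
  forall (IL : Type) (L : IL -> game A) (hL : inhabited IL)
         (IR : Type) (R : IR -> game A),
    gle (addR H L hL R) (addR K L hL R).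

Definition left_equiv (H K : game A) : Prop := leL H K /\ leL K H.
Definition right_equiv (H K : game A) : Prop := leR H K /\ leR K H.

Definition max_in_left_class (M G : game A) : Prop :=
  left_equiv M G /\ forall K, left_equiv K G -> gle M K -> gle K M.

End Order.

(* Main.v *)
Require Import Defs.
From HB Require Import structures.
From mathcomp Require Import all_boot all_order.
Import Order.TTheory.

Definition opt {A} (X G : game A) := leftopt X G \/ rightopt X G.

Lemma gind {A} (P : game A -> Prop) :
  (forall G, (forall X, opt X G -> P X) -> P G) -> forall G, P G.
Proof.
move=> H; elim => [a|IL L IHL IR R IHR hL hR]; apply: H => X.
  by case.
by case=> [[i <-]|[j <-]].
Qed.

Lemma glfE {d} {A : porderType d} (G H : game A) : glf G H ->
  (exists GR, rightopt GR G /\ gle GR H) \/ (exists HL, leftopt HL H /\ gle G HL)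
  \/ (exists a b, G = Atom a /\ H = Atom b /\ (a <= b)%O).
Proof. destruct 1; eauto 10. Qed.
Arguments glfE {d A G H}.

Lemma gleE {d} {A : porderType d} (G H : game A) : gle G H ->
  (forall GL, leftopt GL G -> glf GL H) /\ (forall HR, rightopt HR H -> glf G HR)
  /\ (is_atom G \/ is_atom H -> glf G H).
Proof. by case. Qed.
Arguments gleE {d A G H}.

Lemma atom_le {d} {A : porderType d} (a b : A) : (a <= b)%O -> gle (Atom a) (Atom b).
Proof. by move=> ab; constructor => //; move=> _; apply: glf_atom. Qed.
Arguments atom_le {d A a b}.

Lemma gle_refl {d} {A : porderType d} (G : game A) : gle G G.
Proof.
elim/(@gind A): G => G IH; constructor.
- move=> GL oGL; apply: (glf_left oGL); exact: IH (or_introl oGL).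
- move=> GR oGR; apply: (glf_right oGR); exact: IH (or_intror oGR).
- case: G IH => [a|IL L IR R hL hR] IH [] //= _; exact: glf_atom.
Qed.

Definition T3 {d} {A : porderType d} (G H K : game A) :=
  (gle G H -> gle H K -> gle G K) /\ (glf G H -> gle H K -> glf G K) /\
  (gle G H -> glf H K -> glf G K).

Lemma trans_all {d} {A : porderType d} (G H K : game A) : T3 G H K.
Proof.
move: H K; elim/(@gind A): G => G IHG H; elim/(@gind A): H => H IHH K; elim/(@gind A): K => K IHK.
have P2 : glf G H -> gle H K -> glf G K.
  move=> /glfE [[GR [oGR hGR]] | [[HL [oHL hHL]] | [a [b [eG [eH ab]]]]]] hHK.
  - apply: (glf_right oGR); exact: (IHG GR (or_intror oGR) H K).1 hGR hHK.
  - have hHLK := (gleE hHK).1 HL oHL.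
    exact: (IHH HL (or_introl oHL) K).2.2 hHL hHLK.
  - subst G H.
    have := (gleE hHK).2.2 (or_introl I).
    move=> /glfE [[GR [oGR _]] | [[KL [oKL hKL]] | [a' [c [e1 [eK bc]]]]]].
    + by [].
    + apply: (glf_left oKL). have h1 := (IHK KL (or_introl oKL)). have h2 := h1.1. have h3 := atom_le ab. exact: h2 h3 hKL.
    + case: e1 => e1; subst;  apply: glf_atom; exact: le_trans ab bc.
have P3 : gle G H -> glf H K -> glf G K.
  move=> hGH /glfE [[HR [oHR hHR]] | [[KL [oKL hKL]] | [b [c [eH [eK bc]]]]]].
  - exact: (IHH HR (or_intror oHR) K).2.1 ((gleE hGH).2.1 HR oHR) hHR.
  - apply: (glf_left oKL); exact: (IHK KL (or_introl oKL)).1 hGH hKL.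
  - subst H K.
    have := (gleE hGH).2.2 (or_intror I).
    move=> /glfE [[GR [oGR hGR]] | [[HL [oHL _]] | [a [b' [eG [eb ab]]]]]].
    + apply: (glf_right oGR).
      exact: (IHG GR (or_intror oGR) (Atom b) (Atom c)).1 hGR (atom_le bc).
    + by [].
    + case: eb => eb; subst;  apply: glf_atom; exact: le_trans ab bc.
split; last by split.
move=> hGH hHK; constructor.
- move=> GL oGL; exact: (IHG GL (or_introl oGL) H K).2.1 ((gleE hGH).1 GL oGL) hHK.
- move=> KR oKR; exact: (IHK KR (or_intror oKR)).2.2 hGH ((gleE hHK).2.1 KR oKR).
- case=> hat.
  + exact: P2 ((gleE hGH).2.2 (or_introl hat)) hHK.
  + exact: P3 hGH ((gleE hHK).2.2 (or_intror hat)).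
Qed.

Lemma gle_trans {d} {A : porderType d} (G H K : game A) : gle G H -> gle H K -> gle G K.
Proof. exact: (trans_all G H K).1. Qed.
Lemma glf_gle {d} {A : porderType d} (G H K : game A) : glf G H -> gle H K -> glf G K.
Proof. exact: (trans_all G H K).2.1. Qed.
Lemma gle_glf {d} {A : porderType d} (G H K : game A) : gle G H -> glf H K -> glf G K.
Proof. exact: (trans_all G H K).2.2. Qed.

Arguments gle_trans {d A G H K}.
Arguments glf_gle {d A G H K}.
Arguments gle_glf {d A G H K}.

Section TB.
Local Open Scope order_scope.

Lemma bot_le {d} {A : tbPOrderType d} (X : game A) :
  gle (Atom \bot) X /\ glf (Atom \bot) X.
Proof.
elim/(@gind A): X => X IH.
have hf : glf (Atom \bot) X.
  case: X IH => [b|IL L IR R [i] hR] IH.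
    by apply: glf_atom; exact: le0x.
  have oL : leftopt (L i) (Comp L R (inhabits i) hR) by exists i.
  apply: (glf_left oL); exact: (IH _ (or_introl oL)).1.
split=> //; constructor => //.
move=> XR oXR; exact: (IH _ (or_intror oXR)).2.
Qed.

Lemma le_top {d} {A : tbPOrderType d} (X : game A) :
  gle X (Atom \top) /\ glf X (Atom \top).
Proof.
elim/(@gind A): X => X IH.
have hf : glf X (Atom \top).
  case: X IH => [b|IL L IR R hL [j]] IH.
    by apply: glf_atom; exact: lex1.
  have oR : rightopt (R j) (Comp L R hL (inhabits j)) by exists j.
  apply: (glf_right oR); exact: (IH _ (or_intror oR)).1.
split=> //; constructor => //.
move=> XL oXL; exact: (IH _ (or_introl oXL)).2.
Qed.

Definition Kc {d} {A : tbPOrderType d} (K : game A) : game A :=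
  addL K (fun e : Empty_set => match e with end) (fun _ : unit => Atom \bot)
    (inhabits tt).

Lemma Kc_glf {d} {A : tbPOrderType d} (K X : game A) : glf (Kc K) X.
Proof.
have oR : rightopt (Atom \bot) (Kc K) by exists tt.
apply: (glf_right oR); exact: (bot_le X).1.
Qed.

Lemma K_lo {d} {A : tbPOrderType d} (K : game A) : leftopt K (Kc K).
Proof. by exists None. Qed.

Lemma leL_of {d} {A : tbPOrderType d} (H K : game A) : glf H (Kc K) -> leL H K.
Proof.
move=> hH IL L IR R hR.
have hK : gle (Kc K) (addL K L R hR).
  constructor.
  - move=> GL [[e|] <-] //=.
    have oL : leftopt K (addL K L R hR) by exists None.
    apply: (glf_left oL); exact: gle_refl.
  - move=> HR _; exact: Kc_glf.
  - by case.
constructor.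
- move=> GL [[i|] <-] /=.
  + have oL : leftopt (L i) (addL K L R hR) by exists (Some i).
    apply: (glf_left oL); exact: gle_refl.
  + exact: glf_gle hH hK.
- move=> HR oHR.
  have oR : rightopt HR (addL H L R hR) by exact: oHR.
  apply: (glf_right oR); exact: gle_refl.
- by case.
Qed.

Lemma leL_to {d} {A : tbPOrderType d} (H K : game A) : leL H K -> glf H (Kc K).
Proof.
move=> h; have := h Empty_set (fun e : Empty_set => match e with end) unit
  (fun _ : unit => Atom \bot) (inhabits tt).
move=> /gleE [h1 _]; apply: h1; by exists None.
Qed.

Lemma leL_refl {d} {A : tbPOrderType d} (H : game A) : leL H H.
Proof. by move=> *; exact: gle_refl. Qed.

Lemma leL_trans {d} {A : tbPOrderType d} (H K M : game A) : leL H K -> leL K M -> leL H M.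
Proof. move=> h1 h2 IL L IR R hR; exact: gle_trans (h1 IL L IR R hR) (h2 IL L IR R hR). Qed.

Lemma lemA {d} {A : tbPOrderType d} (K M : game A) :
  glf (Atom \top) M -> glf K (Kc M) -> gle K M.
Proof.
move=> /glfE [[GR [[] _]] | [[ML [oML hML]] | [a [b [ea [eM ab]]]]]].
- move=> /glfE [[KR [oKR hKR]] | [[HL [[[e|] <-] hHL]] | [a [b [_ [e _]]]]]] //.
  constructor.
  + move=> KL oKL; apply: (glf_left oML); exact: gle_trans (le_top KL).1 hML.
  + move=> MR oMR; apply: (glf_right oKR); apply: (gle_trans hKR).
    constructor.
    * move=> GL [[e|] <-] //=; apply: (glf_right oMR); exact: gle_refl.
    * move=> *; exact: Kc_glf.
    * move=> _; exact: Kc_glf.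
  + move=> _; apply: (glf_left oML); exact: gle_trans (le_top K).1 hML.
- subst M; case: ea => ea; subst a.
  have -> : b = \top by apply: le_anti; rewrite ab lex1.
  move=> _; exact: (le_top K).1.
Qed.

Definition NN {d} {A : tbPOrderType d} (G : game A) : game A :=
  Comp (fun _ : unit => Atom \top) (fun _ : unit => Kc G) (inhabits tt) (inhabits tt).

Lemma NN_top {d} {A : tbPOrderType d} (G : game A) : leftopt (Atom \top) (NN G).
Proof. by exists tt. Qed.

Lemma NN_equiv {d} {A : tbPOrderType d} (G : game A) : left_equiv (NN G) G.
Proof.
split; apply: leL_of.
  have oR : rightopt (Kc G) (NN G) by exists tt.
  apply: (glf_right oR); exact: gle_refl.
apply: (glf_left (K_lo _)); constructor.
- move=> GL _; apply: (glf_left (NN_top G)); exact: (le_top GL).1.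
- move=> HR [[] <-]; apply: (glf_left (K_lo G)); exact: gle_refl.
- move=> _; apply: (glf_left (NN_top G)); exact: (le_top G).1.
Qed.

Lemma NN_glf {d} {A : tbPOrderType d} (G : game A) : glf (Atom \top) (NN G).
Proof. apply: (glf_left (NN_top G)); exact: gle_refl. Qed.

Lemma lemB {d} {A : tbPOrderType d} (M G : game A) :
  glf (Atom \top) M -> left_equiv M G -> max_in_left_class M G.
Proof.
move=> hM [h1 h2]; split; first by split.
move=> K [k1 k2] _; apply: lemA hM _; apply: leL_to; exact: leL_trans k1 h2.
Qed.

Lemma max_NN {d} {A : tbPOrderType d} (M G : game A) :
  max_in_left_class M G -> geqv M (NN G).
Proof.
move=> [[h1 h2] hmax]; have [n1 n2] := NN_equiv G.
have hMN : gle M (NN G).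
  apply: lemA (NN_glf G) _; apply: leL_to; exact: leL_trans h1 n2.
split=> //; apply: hmax hMN; by split.
Qed.

End TB.
Arguments max_NN {d A M G}.

Theorem lemma5p14 (d : Order.disp_t) (A : tbPOrderType d) :
  (forall G : game A, exists M, max_in_left_class M G) /\
  (forall G M M' : game A,
      max_in_left_class M G -> max_in_left_class M' G -> geqv M M') /\
  (forall M : game A,
      max_in_left_class M M <-> right_equiv M (Atom (\top)%O)).
Proof.
split.
  move=> G; exists (NN G); apply: lemB (NN_glf G) (NN_equiv G).
split.
  move=> G M M' /max_NN [a1 a2] /max_NN [b1 b2]; split.
    exact: gle_trans a1 b2.
  exact: gle_trans b1 a2.
move=> M; split.
  move=> hmax.
  have hM : glf (Atom \top%O) M.
    have [_ e] := max_NN hmax.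
    exact: (gleE e).1 _ (NN_top M).
  split.
    move=> IL L hL IR R; constructor.
    - move=> GL [i <-]; apply: (glf_left (HL:=L i)); first by exists i.
      exact: gle_refl.
    - move=> HR [[j|] <-] /=.
        apply: (glf_right (GR:=R j)); first by exists (Some j).
        exact: gle_refl.
      apply: (glf_right (GR:=M)); first by exists None.
      exact: (le_top M).1.
    - by case.
  move=> IL L hL IR R; constructor.
  - move=> GL [i <-]; apply: (glf_left (HL:=L i)); first by exists i.
    exact: gle_refl.
  - move=> HR [[j|] <-] /=.
      apply: (glf_right (GR:=R j)); first by exists (Some j).
      exact: gle_refl.
    exact: gle_glf (le_top _).1 hM.
  - by case.
move=> [_ h].
have := h unit (fun _ => Atom \top%O) (inhabits tt) Empty_set
  (fun e : Empty_set => match e with end).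
move=> /gleE [_ [h2 _]].
have h3 := h2 M (ex_intro _ None erefl).
apply: lemB _ (conj (leL_refl M) (leL_refl M)).
apply: (gle_glf _ h3); constructor => //.
- move=> HR [[e|] <-] //=; exact: glf_atom.
- move=> _; apply: (glf_left (HL:=Atom \top%O)); first by exists tt.
  exact: gle_refl.
Qed.
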